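(* Let $(X,\mathrm{dist})$ be a metric space, $\Sigma$ a metric space, and $\{U_\sigma(t,\tau)\}_{\sigma\in\Sigma}$ a family of processes on $X$. If the family is uniformly asymptotically compact, then it possesses the uniform global attractor $A_\Sigma$, and $A_\Sigma=A^\star_\Sigma$.
   Context: A process on $X$ is a family of maps $U(t,\tau):X\to X$, indexed by reals $t\ge\tau$, with $U(\tau,\tau)=\mathrm{id}_X$ and $U(t,\tau)=U(t,s)U(s,\tau)$ for $t\ge s\ge\tau$; no continuity is assumed. For nonempty $B,C\subset X$, $\delta_X(B,C)=\sup_{x\in B}\inf_{\xi\in C}\mathrm{dist}(x,\xi)$. A set $K\subset X$ is uniformly attracting if for every bounded $C\subset X$, $\lim_{t-\tau\to\infty}\sup_{\sigma\in\Sigma}\delta_X(U_\sigma(t,\tau)C,K)=0$. The family is uniformly asymptotically compact if there exists a compact uniformly attracting set. A compact set $A_\Sigma\subset X$ is the uniform global attractor of the family if it is uniformly attracting and is contained in every compact uniformly attracting set. $\mathfrak{C}_\Sigma$ is the collection of all sequences $y_n=U_{\sigma_n}(t_n,\tau_n)x_n$ with $x_n$ a bounded sequence in $X$, $\sigma_n\in\Sigma$, $t_n-\tau_n\to\infty$, and $A^\star_\Sigma=\{x\in X: y_n\to x$ along a subsequence, for some $y_n\in\mathfrak{C}_\Sigma\}$. *)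

(* Defs.v *)
From Stdlib Require Import Reals List.
Open Scope R_scope.

Record MetricSpace := {
  carrier :> Type;
  dist : carrier -> carrier -> R;
  dist_nonneg : forall x y, 0 <= dist x y;
  dist_eq0 : forall x y, dist x y = 0 <-> x = y;
  dist_sym : forall x y, dist x y = dist y x;
  dist_tri : forall x y z, dist x z <= dist x y + dist y z
}.

Arguments dist {m} _ _.

Section Defs.
Variable X : MetricSpace.

Definition open_set (O : X -> Prop) : Prop :=
  forall x, O x -> exists eps, 0 < eps /\ forall y, dist x y < eps -> O y.

Definition compact_set (K : X -> Prop) : Prop :=
  forall (I : Type) (O : I -> X -> Prop),
    (forall i, open_set (O i)) ->
    (forall x, K x -> exists i, O i x) ->
    exists l : list I, forall x, K x -> exists i, In i l /\ O i x.

Definition bounded_set (C : X -> Prop) : Prop :=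
  exists x0 r, forall x, C x -> dist x0 x <= r.

Definition nonempty (C : X -> Prop) : Prop := exists x, C x.

Definition is_process (V : R -> R -> X -> X) : Prop :=
  (forall tau x, V tau tau x = x) /\
  (forall t s tau x, tau <= s -> s <= t -> V t tau x = V t s (V s tau x)).

Definition uniformly_attracting {Sg : Type} (U : Sg -> R -> R -> X -> X)
    (K : X -> Prop) : Prop :=
  forall C : X -> Prop, nonempty C -> bounded_set C ->
  forall eps, 0 < eps -> exists T, forall t tau, tau <= t -> T <= t - tau ->
    forall (s : Sg) x, C x -> exists xi, K xi /\ dist (U s t tau x) xi < eps.

Definition uniformly_asymptotically_compact {Sg : Type}
    (U : Sg -> R -> R -> X -> X) : Prop :=
  exists K, compact_set K /\ uniformly_attracting U K.

Definition uniform_global_attractor {Sg : Type} (U : Sg -> R -> R -> X -> X)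
    (A : X -> Prop) : Prop :=
  compact_set A /\ uniformly_attracting U A /\
  forall K, compact_set K -> uniformly_attracting U K -> forall x, A x -> K x.

Definition seq_converges (u : nat -> X) (x : X) : Prop :=
  forall eps, 0 < eps -> exists N, forall n, (N <= n)%nat -> dist (u n) x < eps.

Definition Astar {Sg : Type} (U : Sg -> R -> R -> X -> X) (x : X) : Prop :=
  exists (xs : nat -> X) (ss : nat -> Sg) (ts taus : nat -> R),
    bounded_set (fun y => exists n, xs n = y) /\
    (forall n, taus n <= ts n) /\
    (forall M, exists N, forall n, (N <= n)%nat -> M <= ts n - taus n) /\
    exists phi : nat -> nat, (forall n, (phi n < phi (S n))%nat) /\
      seq_converges (fun n => U (ss (phi n)) (ts (phi n)) (taus (phi n)) (xs (phi n))) x.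

End Defs.

(* Main.v *)
Require Import Defs.
From Stdlib Require Import Reals List Lra Lia ClassicalEpsilon Classical.
Require Import Defs.
Open Scope R_scope.

Lemma my_choice (A B : Type) (P : A -> B -> Prop) :
  (forall a, exists b, P a b) -> exists f : A -> B, forall a, P a (f a).
Proof.
  intro H. exists (fun a => proj1_sig (constructive_indefinite_description _ (H a))).
  intro a. exact (proj2_sig (constructive_indefinite_description _ (H a))).
Qed.

Lemma nat_large (M : R) : exists N : nat, M <= INR N.
Proof.
  destruct (INR_archimed 1 M) as [n Hn]; [lra|]. exists n. lra.
Qed.

Lemma inv_small (eps : R) : 0 < eps ->
  exists N : nat, forall n, (N <= n)%nat -> / (INR n + 1) < eps.
Proof.
  intro He. destruct (nat_large (/ eps)) as [N HN]. exists N. intros n Hn.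
  apply le_INR in Hn.
  assert (Hpos : 0 < / eps) by (apply Rinv_0_lt_compat; lra).
  rewrite <- (Rinv_inv eps).
  apply Rinv_lt_contravar; [|lra].
  apply Rmult_lt_0_compat; lra.
Qed.

Lemma list_max (I : Type) (f : I -> nat) (l : list I) :
  exists M, forall i, In i l -> (f i <= M)%nat.
Proof.
  induction l as [|a l [M HM]]. exists O; intros i [].
  exists (Nat.max (f a) M). intros i [<-|Hi]. lia. specialize (HM i Hi). lia.
Qed.

Lemma list_maxR (I : Type) (f : I -> R) (l : list I) :
  exists M, forall i, In i l -> f i <= M.
Proof.
  induction l as [|a l [M HM]]. exists 0; intros i [].
  exists (Rmax (f a) M). intros i [<-|Hi]. apply Rmax_l.
  specialize (HM i Hi). eapply Rle_trans; [exact HM| apply Rmax_r].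
Qed.

Lemma list_minR (I : Type) (f : I -> R) (l : list I) :
  (forall i, In i l -> 0 < f i) -> exists d, 0 < d /\ forall i, In i l -> d <= f i.
Proof.
  induction l as [|a l IH]; intro H. exists 1; split; [lra| intros i []].
  destruct IH as [d [Hd Hdi]]. intros i Hi; apply H; right; auto.
  exists (Rmin (f a) d). split. apply Rmin_glb_lt; auto. apply H; left; auto.
  intros i [<-|Hi]. apply Rmin_l. eapply Rle_trans; [apply Rmin_r| auto].
Qed.

Lemma dist_self (X : MetricSpace) (x : X) : dist x x = 0.
Proof. apply (proj2 (dist_eq0 X x x)); reflexivity. Qed.

Lemma compact_closed (X : MetricSpace) (K : X -> Prop) (x : X) :
  compact_set X K -> (forall eps, 0 < eps -> exists xi, K xi /\ dist x xi < eps) -> K x.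
Proof.
  intros HK Hx. apply NNPP; intro Hn.
  destruct (HK {k : X | K k}
    (fun i y => dist (proj1_sig i) y < dist x (proj1_sig i) / 2)) as [l Hl].
  - intros i y Hy. exists (dist x (proj1_sig i) / 2 - dist (proj1_sig i) y). split. lra.
    intros z Hz. pose proof (dist_tri X (proj1_sig i) y z). lra.
  - intros k Hk. exists (exist _ k Hk). simpl. rewrite dist_self.
    assert (dist x k <> 0). { intro E. apply (proj1 (dist_eq0 X x k)) in E. subst; auto. }
    pose proof (dist_nonneg X x k). lra.
  - destruct (list_minR _ (fun i : {k : X | K k} => dist x (proj1_sig i) / 2) l) as [d [Hd Hdi]].
    { intros [k Hk] _. simpl.
      assert (dist x k <> 0). { intro E. apply (proj1 (dist_eq0 X x k)) in E. subst; auto. }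
      pose proof (dist_nonneg X x k). lra. }
    destruct (Hx d Hd) as [xi [Hxi Hd2]].
    destruct (Hl xi Hxi) as [i [Hi Hin]]. specialize (Hdi i Hi). simpl in *.
    pose proof (dist_tri X x xi (proj1_sig i)).
    pose proof (dist_sym X xi (proj1_sig i)). lra.
Qed.

Lemma compact_bounded (X : MetricSpace) (K : X -> Prop) (x0 : X) :
  compact_set X K -> exists r, forall x, K x -> dist x0 x <= r.
Proof.
  intro HK. destruct (HK X (fun k y => dist k y < 1)) as [l Hl].
  - intros i y Hy. exists (1 - dist i y). split. lra.
    intros z Hz. pose proof (dist_tri X i y z). lra.
  - intros k _. exists k. rewrite dist_self. lra.
  - destruct (list_maxR _ (fun i => dist x0 i) l) as [M HM].
    exists (M + 1). intros x Hx. destruct (Hl x Hx) as [i [Hi Hin]].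
    specialize (HM i Hi). pose proof (dist_tri X x0 i x). simpl in *. lra.
Qed.

Fixpoint build (g : nat -> nat -> nat) (m : nat) : nat :=
  match m with O => g O O | S m' => g (S m') (S (build g m')) end.

Lemma phi_ge (phi : nat -> nat) : (forall n, (phi n < phi (S n))%nat) -> forall n, (n <= phi n)%nat.
Proof. intros H n; induction n. lia. specialize (H n). lia. Qed.

Lemma cluster (X : MetricSpace) (K : X -> Prop) (k : nat -> X) :
  compact_set X K -> (forall n, K (k n)) ->
  exists p (phi : nat -> nat), (forall n, (phi n < phi (S n))%nat) /\
    seq_converges X (fun n => k (phi n)) p.
Proof.
  intros HK Hk.
  assert (Hp: exists p, forall eps, 0 < eps -> forall N, exists n, (N <= n)%nat /\ dist (k n) p < eps).
  { apply NNPP; intro H.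
    assert (H2: forall p, exists eps N, 0 < eps /\ forall n, (N <= n)%nat -> eps <= dist (k n) p).
    { intro p. apply NNPP; intro Hc. apply H. exists p. intros eps Heps N.
      apply NNPP; intro Hc2. apply Hc. exists eps, N. split; auto. intros n Hn.
      destruct (Rlt_or_le (dist (k n) p) eps) as [h|h]; auto.
      exfalso; apply Hc2; exists n; auto. }
    destruct (HK {q : X * R * nat | 0 < snd (fst q) /\ forall n, (snd q <= n)%nat -> snd (fst q) <= dist (k n) (fst (fst q))}
      (fun i y => dist (fst (fst (proj1_sig i))) y < snd (fst (proj1_sig i)))) as [l Hl].
    - intros i y Hy. exists (snd (fst (proj1_sig i)) - dist (fst (fst (proj1_sig i))) y). split. lra.
      intros z Hz. pose proof (dist_tri X (fst (fst (proj1_sig i))) y z). lra.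
    - intros x _. destruct (H2 x) as [e [N [He HN]]].
      exists (exist _ (x, e, N) (conj He HN)). simpl. rewrite dist_self. lra.
    - destruct (list_max _ (fun i => snd (proj1_sig i)) l) as [M HM].
      destruct (Hl (k M) (Hk M)) as [i [Hi Hin]].
      specialize (HM i Hi). destruct i as [[[c e] N] [He HN]]. clear Hi. simpl in *.
      specialize (HN M HM). pose proof (dist_sym X c (k M)). lra. }
  destruct Hp as [p Hp].
  destruct (my_choice (nat * nat) nat
    (fun q n => (snd q <= n)%nat /\ dist (k n) p < / (INR (fst q) + 1))) as [g Hg].
  { intros [m N]. simpl. apply Hp. apply Rinv_0_lt_compat. pose proof (pos_INR m). lra. }
  set (phi := build (fun m N => g (m, N))).
  assert (Hcl : forall m, dist (k (phi m)) p < / (INR m + 1)).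
  { intros [|m]; unfold phi; simpl; [apply (Hg (0%nat, 0%nat)) | apply (Hg (S m, _))]. }
  exists p, phi. split.
  - intro n. unfold phi; simpl. destruct (Hg (S n, S (build (fun m N => g (m, N)) n))) as [h _].
    simpl in h. lia.
  - intros eps Heps. destruct (inv_small eps Heps) as [N HN]. exists N. intros n Hn.
    specialize (Hcl n). specialize (HN n Hn). lra.
Qed.

Lemma Astar_intro (X Sg : MetricSpace) (U : Sg -> R -> R -> X -> X) (B : X -> Prop)
  (xs : nat -> X) (ss : nat -> Sg) (ts taus : nat -> R) (phi : nat -> nat) (x : X) :
  bounded_set X B -> (forall n, B (xs n)) -> (forall n, taus n <= ts n) ->
  (forall n, INR n <= ts n - taus n) -> (forall n, (phi n < phi (S n))%nat) ->
  seq_converges X (fun n => U (ss (phi n)) (ts (phi n)) (taus (phi n)) (xs (phi n))) x ->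
  Astar X U x.
Proof.
  intros [x0 [r Hr]] HB Hle Hl Hphi Hc.
  exists xs, ss, ts, taus. split; [|split; [auto|split]].
  - exists x0, r. intros y [n <-]. auto.
  - intro M. destruct (nat_large M) as [N HN]. exists N. intros n Hn.
    apply le_INR in Hn. specialize (Hl n). lra.
  - exists phi. auto.
Qed.

Lemma Astar_sub (X Sg : MetricSpace) (U : Sg -> R -> R -> X -> X) (K : X -> Prop) :
  compact_set X K -> uniformly_attracting X U K -> forall x, Astar X U x -> K x.
Proof.
  intros HKc HKa x [xs [ss [ts [taus [Hb [Hle [Hl [phi [Hphi Hc]]]]]]]]].
  apply (compact_closed X K x HKc). intros eps Heps.
  destruct (HKa (fun y => exists n, xs n = y)) with (eps := eps / 2) as [T HT].
  { exists (xs O), O. auto. } { auto. } { lra. }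
  destruct (Hl T) as [N1 HN1]. destruct (Hc (eps/2)) as [N2 HN2]; [lra|].
  set (n := Nat.max N1 N2).
  assert (Hn : (n <= phi n)%nat) by (apply phi_ge; auto).
  assert (HnN : (N1 <= n /\ N2 <= n)%nat) by (unfold n; lia).
  destruct (HT (ts (phi n)) (taus (phi n)) (Hle _) (HN1 (phi n) ltac:(lia)) (ss (phi n)) (xs (phi n)))
    as [xi [Hxi Hd]]. { exists (phi n); auto. }
  exists xi. split; auto.
  specialize (HN2 n ltac:(lia)). simpl in HN2.
  pose proof (dist_tri X x (U (ss (phi n)) (ts (phi n)) (taus (phi n)) (xs (phi n))) xi).
  pose proof (dist_sym X x (U (ss (phi n)) (ts (phi n)) (taus (phi n)) (xs (phi n)))). lra.
Qed.

Lemma Astar_closed (X Sg : MetricSpace) (U : Sg -> R -> R -> X -> X)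
  (HU : forall s : Sg, is_process X (U s)) (K0 : X -> Prop) :
  compact_set X K0 -> uniformly_attracting X U K0 ->
  forall x, (forall eps, 0 < eps -> exists a, Astar X U a /\ dist x a < eps) -> Astar X U x.
Proof.
  intros HKc HKa x Hx.
  set (B := fun z : X => exists xi, K0 xi /\ dist z xi < 1).
  assert (HB : bounded_set X B).
  { destruct (compact_bounded X K0 x HKc) as [r Hr]. exists x, (r + 1).
    intros z [xi [Hxi Hz]]. specialize (Hr xi Hxi).
    pose proof (dist_tri X x xi z). pose proof (dist_sym X z xi). lra. }
  assert (Hk : forall k : nat, exists q : X * Sg * R * R,
    B (fst (fst (fst q))) /\ snd q <= snd (fst q) /\ INR k <= snd (fst q) - snd q /\
    dist (U (snd (fst (fst q))) (snd (fst q)) (snd q) (fst (fst (fst q)))) x < / (INR k + 1)).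
  { intro k.
    assert (Hek : 0 < / (INR k + 1)) by (apply Rinv_0_lt_compat; pose proof (pos_INR k); lra).
    destruct (Hx (/ (INR k + 1) / 2)) as [a [Ha Hxa]]; [lra|].
    destruct Ha as [xs [ss [ts [taus [Hb [Hle [Hl [phi [Hphi Hc]]]]]]]]].
    destruct (HKa (fun y => exists n, xs n = y)) with (eps := 1) as [T HT].
    { exists (xs O), O. auto. } { auto. } { lra. }
    set (h := Rmax T 0).
    destruct (Hl (h + INR k)) as [N1 HN1].
    destruct (Hc (/ (INR k + 1) / 2)) as [N2 HN2]; [lra|].
    set (n := Nat.max N1 N2).
    assert (Hn : (n <= phi n)%nat) by (apply phi_ge; auto).
    set (m := phi n).
    assert (HnN : (N1 <= n /\ N2 <= n)%nat) by (unfold n; lia).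
    specialize (HN1 m ltac:(unfold m; lia)). specialize (HN2 n ltac:(lia)). simpl in HN2.
    fold m in HN2.
    assert (Hh0 : 0 <= h) by apply Rmax_r. assert (HhT : T <= h) by apply Rmax_l.
    pose proof (pos_INR k).
    set (tau' := taus m + h).
    set (z := U (ss m) tau' (taus m) (xs m)).
    exists (z, ss m, ts m, tau'). simpl. split; [|split; [|split]].
    - destruct (HT tau' (taus m) ltac:(unfold tau'; lra) ltac:(unfold tau'; lra) (ss m) (xs m))
        as [xi [Hxi Hd]]. { exists m; auto. }
      exists xi; split; auto.
    - unfold tau'; lra.
    - unfold tau'; lra.
    - unfold z. rewrite <- (proj2 (HU (ss m)) (ts m) tau' (taus m) (xs m)); try (unfold tau'; lra).
      pose proof (dist_tri X (U (ss m) (ts m) (taus m) (xs m)) a x).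
      pose proof (dist_sym X x a). lra. }
  destruct (my_choice _ _ _ Hk) as [f Hf].
  apply (Astar_intro X Sg U B (fun n => fst (fst (fst (f n)))) (fun n => snd (fst (fst (f n))))
    (fun n => snd (fst (f n))) (fun n => snd (f n)) (fun n => n) x HB).
  - intro n; apply Hf.
  - intro n; apply Hf.
  - intro n; apply Hf.
  - intro n; lia.
  - intros eps Heps. destruct (inv_small eps Heps) as [N HN]. exists N. intros n Hn.
    specialize (HN n Hn). destruct (Hf n) as [_ [_ [_ H]]]. lra.
Qed.

Lemma Astar_compact (X Sg : MetricSpace) (U : Sg -> R -> R -> X -> X)
  (HU : forall s : Sg, is_process X (U s)) (K0 : X -> Prop) :
  compact_set X K0 -> uniformly_attracting X U K0 -> compact_set X (Astar X U).
Proof.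
  intros HKc HKa I O HO Hcov.
  destruct (HKc (option I) (fun o y => match o with Some i => O i y | None => ~ Astar X U y end))
    as [l Hl].
  - intros [i|] y Hy. apply HO; auto.
    assert (H : exists eps, 0 < eps /\ forall a, Astar X U a -> eps <= dist y a).
    { apply NNPP; intro Hn. apply Hy. apply (Astar_closed X Sg U HU K0 HKc HKa).
      intros eps Heps. apply NNPP; intro Hc. apply Hn. exists eps. split; auto.
      intros a Ha. destruct (Rlt_or_le (dist y a) eps); auto. exfalso; apply Hc; eauto. }
    destruct H as [eps [Heps Ha]]. exists eps. split; auto.
    intros z Hz Hza. specialize (Ha z Hza). lra.
  - intros x _. destruct (classic (Astar X U x)) as [Ha|Ha].
    + destruct (Hcov x Ha) as [i Hi]. exists (Some i); auto.
    + exists None; auto.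
  - exists (flat_map (fun o => match o with Some i => i :: nil | None => nil end) l).
    intros x Hx. destruct (Hl x (Astar_sub X Sg U K0 HKc HKa x Hx)) as [[i|] [Hin Ho]].
    + exists i. split; auto. apply in_flat_map. exists (Some i). split; auto. left; auto.
    + contradiction.
Qed.

Lemma Astar_attracting (X Sg : MetricSpace) (U : Sg -> R -> R -> X -> X) (K0 : X -> Prop) :
  compact_set X K0 -> uniformly_attracting X U K0 -> uniformly_attracting X U (Astar X U).
Proof.
  intros HKc HKa C HCne HCb eps Heps. apply NNPP; intro Hn.
  assert (Hk : forall n : nat, exists q : X * Sg * R * R * X,
    C (fst (fst (fst (fst q)))) /\ snd (fst q) <= snd (fst (fst q)) /\
    INR n <= snd (fst (fst q)) - snd (fst q) /\ K0 (snd q) /\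
    dist (U (snd (fst (fst (fst q)))) (snd (fst (fst q))) (snd (fst q)) (fst (fst (fst (fst q))))) (snd q)
      < / (INR n + 1) /\
    forall xi, Astar X U xi ->
      eps <= dist (U (snd (fst (fst (fst q)))) (snd (fst (fst q))) (snd (fst q)) (fst (fst (fst (fst q))))) xi).
  { intro n.
    assert (Hen : 0 < / (INR n + 1)) by (apply Rinv_0_lt_compat; pose proof (pos_INR n); lra).
    destruct (HKa C HCne HCb _ Hen) as [T HT].
    apply NNPP; intro Hc. apply Hn. exists (Rmax T (INR n)).
    intros t tau Hle HTt s x Hx. apply NNPP; intro Hc2. apply Hc.
    pose proof (Rmax_l T (INR n)). pose proof (Rmax_r T (INR n)).
    destruct (HT t tau Hle ltac:(lra) s x Hx) as [xi [Hxi Hd]].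
    exists (x, s, t, tau, xi). simpl. split; [auto|split; [auto|split; [lra|split; [auto|split; [auto|]]]]].
    intros xi' Ha. destruct (Rlt_or_le (dist (U s t tau x) xi') eps) as [h|h]; auto.
    exfalso; apply Hc2; exists xi'; auto. }
  destruct (my_choice _ _ _ Hk) as [f Hf].
  destruct (cluster X K0 (fun n => snd (f n)) HKc) as [p [phi [Hphi Hcv]]].
  { intro n; apply Hf. }
  set (y := fun n => U (snd (fst (fst (fst (f n))))) (snd (fst (fst (f n)))) (snd (fst (f n)))
                       (fst (fst (fst (fst (f n)))))).
  assert (Hy : seq_converges X (fun n => y (phi n)) p).
  { intros e He. destruct (inv_small (e/2)) as [N1 HN1]; [lra|].
    destruct (Hcv (e/2)) as [N2 HN2]; [lra|].
    exists (Nat.max N1 N2). intros n Hnn.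
    pose proof (phi_ge phi Hphi n).
    assert (HnN : (N1 <= n /\ N2 <= n)%nat) by lia.
    specialize (HN1 (phi n) ltac:(lia)). specialize (HN2 n ltac:(lia)). simpl in HN2.
    destruct (Hf (phi n)) as [_ [_ [_ [_ [Hd _]]]]].
    pose proof (dist_tri X (y (phi n)) (snd (f (phi n))) p). unfold y in *. lra. }
  assert (Hp : Astar X U p).
  { apply (Astar_intro X Sg U C (fun n => fst (fst (fst (fst (f n))))) (fun n => snd (fst (fst (fst (f n)))))
      (fun n => snd (fst (fst (f n)))) (fun n => snd (fst (f n))) phi p HCb); auto;
      intro n; apply Hf. }
  destruct (Hy eps Heps) as [N HN]. specialize (HN N (le_n N)). simpl in HN.
  destruct (Hf (phi N)) as [_ [_ [_ [_ [_ Hfar]]]]]. specialize (Hfar p Hp).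
  unfold y in HN. lra.
Qed.

Theorem theorem3p5 (X : MetricSpace) (Sigma : MetricSpace)
  (U : Sigma -> R -> R -> X -> X)
  (HU : forall s : Sigma, is_process X (U s)) :
  uniformly_asymptotically_compact X U ->
  exists A : X -> Prop,
    uniform_global_attractor X U A /\ (forall x, A x <-> Astar X U x).
Proof.
  intros [K0 [HKc HKa]]. exists (Astar X U). split; [|tauto].
  split; [|split].
  - apply (Astar_compact X Sigma U HU K0 HKc HKa).
  - apply (Astar_attracting X Sigma U K0 HKc HKa).
  - intros K Hc Ha. apply (Astar_sub X Sigma U K Hc Ha).
Qed.
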